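(* Let $1\le m\le k\le l$ be integers with $m\mid l-k+1$. Then $$d_m\Big(\frac{\{k-1\}_q!}{g_{l,k-1}}\Big)=\begin{cases}0 & \text{if } m\mid k,\\ 1 & \text{if } m\nmid k.\end{cases}$$ Consequently $d_m\big(\{k\}_q\,\{k-1\}_q!/g_{l,k-1}\big)=1$.
   Context: In $\mathbb{Z}[q,q^{-1}]$ set $\{i\}_q=q^i-1$, $\{i\}_{q,n}=\{i\}_q\cdots\{i-n+1\}_q$ (equal to $1$ for $n=0$), $\{n\}_q!=\{n\}_{q,n}$. For $0\le i\le k\le l$ set $h_{l,k,i}=\{l-i\}_{q,k-i}\{i\}_q!$ and $g_{l,k}=\mathrm{GCD}(h_{l,k,0},\dots,h_{l,k,k})$ (greatest common divisor in the UFD $\mathbb{Z}[q,q^{-1}]$, up to units); $g_{l,k-1}$ divides $\{k-1\}_q!$. For nonzero $a$ and $m\ge 1$, $d_m(a)$ is the largest integer $i$ with $a\in\Phi_m^i\mathbb{Z}[q,q^{-1}]$, $\Phi_m$ the $m$th cyclotomic polynomial. *)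

(* Defs.v *)
From HB Require Import structures.
From mathcomp Require Import all_boot all_order all_algebra all_field.
Set Implicit Arguments. Unset Strict Implicit. Unset Printing Implicit Defensive.
Import GRing.Theory.
Local Open Scope ring_scope.

Definition pdvd (a b : {poly int}) : Prop := exists c : {poly int}, b = a * c.

Definition qbr (i : nat) : {poly int} := 'X^i - 1.
Definition qfall (i n : nat) : {poly int} := \prod_(j < n) qbr (i - j)%N.
Definition qfact (n : nat) : {poly int} := qfall n n.
Definition hlki (l k i : nat) : {poly int} := qfall (l - i)%N (k - i)%N * qfact i.

Definition isGCD (g : {poly int}) (s : seq {poly int}) : Prop :=
  (forall x, x \in s -> pdvd g x) /\
  (forall d, (forall x, x \in s -> pdvd d x) -> pdvd d g).

Definition hfam (l k : nat) : seq {poly int} := [seq hlki l k i | i <- iota 0 k.+1].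

Definition dm_is (m : nat) (a : {poly int}) (e : nat) : Prop :=
  pdvd ('Phi_m ^+ e) a /\ (forall j : nat, pdvd ('Phi_m ^+ j) a -> (j <= e)%N).

(* Main.v *)
Require Import Defs.
From HB Require Import structures.
From mathcomp Require Import all_boot all_order all_algebra all_field.
From mathcomp Require Import zify.
Import GRing.Theory Num.Theory.
Local Open Scope ring_scope.
Set Implicit Arguments. Unset Strict Implicit.

Definition pC (f : {poly int}) : {poly algC} := map_poly (intr : int -> algC) f.
Definition vz (z : algC) (f : {poly int}) : nat := mup z (pC f).

Lemma pC_eq0 f : (pC f == 0) = (f == 0).
Proof.
by rewrite -!size_poly_eq0 /pC size_map_inj_poly //; apply: intr_inj.
Qed.

Lemma pCM f g : pC (f * g) = pC f * pC g.
Proof. by rewrite /pC rmorphM. Qed.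

Lemma vzM z f g : f != 0 -> g != 0 -> vz z (f * g) = (vz z f + vz z g)%N.
Proof. by move=> f0 g0; rewrite /vz pCM mupM ?pC_eq0. Qed.


Lemma pC_Phi m z : m.-primitive_root z -> pC 'Phi_m = cyclotomic z m.
Proof. exact: Cintr_Cyclotomic. Qed.

Lemma root_dvd m z (pz : m.-primitive_root z) f :
  root (pC f) z -> exists q, f = 'Phi_m * q.
Proof.
move=> rf.
have mon := Cyclotomic_monic m.
have Df := Pdiv.RingMonic.rdivp_eq mon f.
set r := Pdiv.CommonRing.rmodp f 'Phi_m in Df.
set d := Pdiv.CommonRing.rdivp f 'Phi_m in Df.
suff r0 : r = 0 by exists d; rewrite {1}Df r0 addr0 mulrC.
have rr : root (pC r) z.
  have -> : r = f - d * 'Phi_m by rewrite {1}Df addrC addKr.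
  rewrite /pC rmorphB rmorphM /= -/(pC f) -/(pC 'Phi_m) (pC_Phi pz).
  move: rf; rewrite /root !hornerE (eqP (_ : (cyclotomic z m).[z] == 0)) ?mulr0 ?subr0 //.
  by rewrite -/(root _ _) root_cyclotomic.
have [p [Dp monp] dvp] := minCpolyP z.
have eqr : pC r = map_poly ratr (map_poly (intr : int -> rat) r).
  rewrite -map_poly_comp; apply: eq_map_poly => x /=; by rewrite rmorph_int.
have : p %| map_poly (intr : int -> rat) r by rewrite -dvp -eqr.
have szp : size p = size 'Phi_m.
  rewrite -(size_map_poly (ratr : {rmorphism rat -> algC}) p) -Dp (minCpoly_cyclotomic pz).
  by rewrite -(pC_Phi pz) /pC size_map_inj_poly //; apply: intr_inj.
have szr : (size r < size 'Phi_m)%N by apply: Pdiv.Ring.ltn_rmodpN0; apply: monic_neq0.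
apply: contraTeq => r0; apply/negP => /dvdp_leq.
rewrite -szp in szr.
rewrite size_map_inj_poly //; last exact: intr_inj.
move=> H; suff : (size p <= size r)%N by rewrite leqNgt szr.
apply: H; rewrite -size_poly_eq0 size_map_inj_poly ?size_poly_eq0 //; exact: intr_inj.
Qed.

Lemma qbr_neq0 i : (0 < i)%N -> qbr i != 0.
Proof. by move=> i0; rewrite /qbr -polyC1 monic_neq0 // monicXnsubC. Qed.

Lemma pC_qbr i : pC (qbr i) = 'X^i - 1.
Proof. by rewrite /pC /qbr rmorphB /= map_polyXn rmorph1. Qed.

Lemma v_qbr_le1 z i : z != 0 -> (0 < i)%N -> (vz z (qbr i) <= 1)%N.
Proof.
move=> z0 i0; rewrite /vz mup_leq ?pC_eq0 ?qbr_neq0 // pC_qbr.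
apply/negP => /dvdpP [q Dq].
have := congr1 (fun p => (deriv p).[z]) Dq => /=.
rewrite derivB derivXn derivC subr0 exprS !derivM derivXsubC.
rewrite !hornerE /= subrr !(mulr0, mul0r, addr0, add0r, mulr1).
rewrite hornerMn hornerXn subrr mulr0; apply/eqP; rewrite mulrn_eq0 negb_or -lt0n i0 /=.
by rewrite expf_neq0.
Qed.

Lemma v_le_dvd z f g c : f = g * c -> f != 0 -> (vz z g <= vz z f)%N.
Proof.
move=> -> fn0; have := fn0; rewrite mulf_eq0 negb_or => /andP [g0 c0].
by rewrite vzM // leq_addr.
Qed.

Lemma root_v z f : f != 0 -> root (pC f) z = (0 < vz z f)%N.
Proof. by move=> f0; rewrite /vz -XsubC_dvd ?pC_eq0 // dvdp_XsubCl. Qed.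

Lemma prim_neq0 m (z : algC) : m.-primitive_root z -> z != 0.
Proof.
move=> pz; apply/eqP => z0.
have m0 := prim_order_gt0 pz.
have := prim_expr_order pz; rewrite z0 expr0n; case: m m0 {pz} => // m _ /=.
by move/eqP; rewrite eq_sym oner_eq0.
Qed.

Lemma vPhi m z : m.-primitive_root z -> vz z 'Phi_m = 1%N.
Proof.
move=> pz; have m0 := prim_order_gt0 pz.
have Phi0 : 'Phi_m != 0 by apply: monic_neq0; apply: Cyclotomic_monic.
apply/eqP; rewrite eqn_leq -root_v // (pC_Phi pz) root_cyclotomic // pz andbT.
have := prod_Cyclotomic m0.
rewrite (big_rem m) /=; last by rewrite -dvdn_divisors.
move=> E.
have qm0 : qbr m != 0 by apply: qbr_neq0.
apply: (leq_trans _ (v_qbr_le1 (prim_neq0 pz) m0)).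
exact: (@v_le_dvd z (qbr m) _ _ (esym E)). Qed.

Lemma v_pow m z : m.-primitive_root z -> forall j, vz z ('Phi_m ^+ j) = j.
Proof.
move=> pz; have Phi0 : 'Phi_m != 0 by apply: monic_neq0; apply: Cyclotomic_monic.
elim=> [|j IH]; first by rewrite expr0 /vz /pC rmorph1 mupNroot // root1 ?oner_neq0.
by rewrite exprS vzM ?expf_neq0 // IH (vPhi pz).
Qed.

Lemma dvd_iff_v m z : m.-primitive_root z -> forall j f, f != 0 ->
  pdvd ('Phi_m ^+ j) f <-> (j <= vz z f)%N.
Proof.
move=> pz; have Phi0 : 'Phi_m != 0 by apply: monic_neq0; apply: Cyclotomic_monic.
move=> j f f0; split.
  move=> [c Dc]; move: (f0); rewrite Dc mulf_eq0 negb_or => /andP [HP HC].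
  by subst f; rewrite vzM ?expf_neq0 // (v_pow pz) leq_addr.
elim: j f f0 => [|j IH] f f0 H; first by exists f; rewrite expr0 mul1r.
have : root (pC f) z by rewrite root_v // (leq_ltn_trans _ H).
move=> /(root_dvd pz) [q Dq].
have q0 : q != 0 by apply: contra_neq f0 => q0; rewrite Dq q0 mulr0.
have [c Dc] : pdvd ('Phi_m ^+ j) q.
  by apply: IH => //; move: H; rewrite Dq vzM // (vPhi pz).
by exists c; rewrite Dq Dc exprS mulrA.
Qed.

Lemma v_qbr m z : m.-primitive_root z -> forall i, (0 < i)%N ->
  vz z (qbr i) = (m %| i)%N.
Proof.
move=> pz i i0; have [mi|mi] := boolP (m %| i)%N.
  apply/eqP; rewrite eqn_leq v_qbr_le1 ?(prim_neq0 pz) //= -root_v ?qbr_neq0 //.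
  by rewrite pC_qbr rootE !hornerE subr_eq0 -(prim_order_dvd pz) mi.
rewrite /vz mupNroot // pC_qbr rootE !hornerE subr_eq0.
by rewrite -(prim_order_dvd pz).
Qed.

Lemma divn_pred m x : (0 < m)%N -> (0 < x)%N ->
  (x %/ m = (x.-1) %/ m + (m %| x))%N.
Proof.
move=> m0 x0.
have Ex : x = ((x.-1) %/ m * m + ((x.-1) %% m).+1)%N.
  by rewrite addnS -divn_eq prednK.
have lt : ((x.-1) %% m < m)%N by rewrite ltn_pmod.
rewrite {1 3}Ex divnMDl // /dvdn modnMDl.
case: (ltngtP ((x.-1) %% m).+1 m) => [h|h|->].
- by rewrite (divn_small h) (modn_small h).
- by move: h; rewrite ltnS leqNgt lt.
- by rewrite divnn m0 modnn.
Qed.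

Lemma qfall_neq0 n c : (c <= n)%N -> qfall n c != 0.
Proof.
move=> cn; rewrite /qfall; apply/prodf_neq0 => j _.
by apply: qbr_neq0; rewrite subn_gt0 (leq_trans (ltn_ord j)).
Qed.

Lemma v_qfall m z : m.-primitive_root z -> forall n c, (c <= n)%N ->
  vz z (qfall n c) = (n %/ m - (n - c) %/ m)%N.
Proof.
move=> pz; have m0 := prim_order_gt0 pz.
move=> n; elim=> [|c IH] cn.
  by rewrite /qfall big_ord0 subn0 subnn /vz /pC rmorph1 mupNroot // root1 ?oner_neq0.
have cn' : (c <= n)%N by apply: ltnW.
have -> : qfall n c.+1 = qfall n c * qbr (n - c).
  by rewrite /qfall big_ord_recr.
rewrite vzM ?qfall_neq0 ?qbr_neq0 ?subn_gt0 // IH // (v_qbr pz) ?subn_gt0 //.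
have := divn_pred m0 (_ : (0 < n - c)%N); rewrite subn_gt0 => /(_ cn).
have -> : ((n - c).-1 = n - c.+1)%N by rewrite subnS.
have := leq_div2r m (leq_subr c n).
have := leq_div2r m (leq_subr c.+1 n).
lia.
Qed.

Lemma arith1 m x y : (0 < m)%N ->
  ((x + y) %/ m <= x %/ m + y %/ m + ~~ (m %| (x + y).+1))%N.
Proof.
move=> m0; rewrite divnD //.
case: (leqP m (x %% m + y %% m)) => carry; last by rewrite addn0 leq_addr.
rewrite leq_add2l lt0b; apply/negP => H.
have Hm := modnD x y m0; rewrite carry mul1n in Hm.
have rx : (x %% m < m)%N by rewrite ltn_pmod.
have ry : (y %% m < m)%N by rewrite ltn_pmod.
have E : ((x + y).+1 = (x + y) %/ m * m + ((x + y) %% m).+1)%N.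
  by rewrite addnS -divn_eq.
rewrite E dvdn_addr ?dvdn_mull // in H.
have := dvdn_leq (ltn0Sn _) H.
lia.
Qed.

Lemma arith2 m k : (0 < m)%N -> (m <= k)%N -> ~~ (m %| k)%N ->
  ((k.-1 - m.-1) %/ m + m.-1 %/ m + 1 = k.-1 %/ m)%N.
Proof.
move=> m0 mk nd.
have -> : (m.-1 %/ m = 0)%N by rewrite divn_small // prednK.
have -> : (k.-1 - m.-1 = k - m)%N by lia.
have Hk : (k %/ m = (k - m) %/ m + 1)%N.
  by rewrite -{1}(subnK mk) divnDr // divnn m0.
have := divn_pred m0 (leq_trans m0 mk).
rewrite (negbTE nd) /= addn0 Hk => H.
lia.
Qed.

Lemma hlki_neq0 l k i : (i <= k)%N -> (k <= l)%N -> hlki l k i != 0.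
Proof.
move=> ik kl; rewrite /hlki mulf_neq0 // qfall_neq0 //; lia.
Qed.

Theorem mainTheorem7 (m k l : nat) :
  (1 <= m)%N -> (m <= k)%N -> (k <= l)%N -> (m %| (l - k).+1)%N ->
  forall g a : {poly int},
    isGCD g (hfam l k.-1) ->
    qfact k.-1 = g * a ->
    dm_is m a (if (m %| k)%N then 0%N else 1%N) /\
    dm_is m (qbr k * a) 1%N.
Proof.
move=> m1 mk kl mdvd g a [G1 G2] E.
case: (C_prim_root_exists m1) => z pz.
set k' := k.-1.
have kk : k = k'.+1 by rewrite /k' prednK // (leq_trans m1 mk).
clearbody k'. rewrite kk /= in E G1 G2.
have mdvd' : (m %| l - k')%N by rewrite (_ : l - k' = (l - k).+1)%N //; lia.
have qf0 : qfact k' != 0 by apply: qfall_neq0.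
have g0 : g != 0 by apply: contra_neq qf0; rewrite E => ->; rewrite mul0r.
have a0 : a != 0 by apply: contra_neq qf0; rewrite E => ->; rewrite mulr0.
have vfact : vz z (qfact k') = (k' %/ m)%N.
  by rewrite /qfact (v_qfall pz) // subnn div0n subn0.
have vh : forall i, (i <= k')%N -> vz z (hlki l k' i) = ((k' - i) %/ m + i %/ m)%N.
  move=> i ik; rewrite /hlki vzM ?qfall_neq0 //; last by lia.
  rewrite (v_qfall pz); last by lia.
  have -> : (l - i = (l - k') + (k' - i))%N by lia.
  rewrite addnK divnDl // addKn.
  by rewrite /qfact (v_qfall pz) // subnn div0n subn0.
have memh : forall i, (i <= k')%N -> hlki l k' i \in hfam l k'.
  move=> i ik; apply/mapP; exists i => //; rewrite mem_iota; lia.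
set e := (if (m %| k)%N then 0%N else 1%N).
have vgE : vz z (qfact k') = (vz z g + vz z a)%N by rewrite E vzM.
have lowg : (k' %/ m - e <= vz z g)%N.
  apply/(dvd_iff_v pz _ g0); apply: G2 => x /mapP [i]; rewrite mem_iota => /andP [_ ik] ->.
  have ik' : (i <= k')%N by lia.
  apply/(dvd_iff_v pz _ (hlki_neq0 ik' _)); first by lia.
  rewrite vh //.
  have := arith1 (k' - i) i m1.
  rewrite subnK // -kk /e; case: (m %| k)%N => /=; first by rewrite addn0 subn0.
  by rewrite leq_subLR addnC.
have upg : (vz z g + e <= k' %/ m)%N.
  rewrite /e; case: ifP => mk'.
    by rewrite addn0 -vfact vgE leq_addr.
  have im : (m.-1 <= k')%N by lia.
  have [c Dc] := G1 _ (memh _ im).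
  have := v_le_dvd z Dc (hlki_neq0 im (_ : k' <= l)%N).
  have A2 := arith2 m1 mk (negbT mk'); rewrite kk /= in A2.
  rewrite vh // -A2 => H.
  by rewrite leq_add2r H //; apply: ltnW; rewrite -kk.
have va : vz z a = e by lia.
have dmA : dm_is m a e.
  split; first by apply/(dvd_iff_v pz _ a0); rewrite va.
  by move=> j /(dvd_iff_v pz _ a0); rewrite va.
split => //.
have qa0 : qbr k * a != 0 by rewrite mulf_neq0 // qbr_neq0 // (leq_trans m1 mk).
have vqa : vz z (qbr k * a) = 1%N.
  rewrite vzM ?qbr_neq0 ?(leq_trans m1 mk) // (v_qbr pz) ?(leq_trans m1 mk) // va /e.
  by case: (m %| k)%N.
split; first by apply/(dvd_iff_v pz _ qa0); rewrite vqa.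
by move=> j /(dvd_iff_v pz _ qa0); rewrite vqa.
Qed.
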